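(* Let $G$ be a finite group and let $\chi, \chi' \in \mathrm{Irr}(G)$. Then $\sum_{C \in \mathrm{Conj}(G)} |C|^2 \chi(C)\overline{\chi'(C)}$ is an integer divisible by $|Z(G)|$.
   Context: $\mathrm{Irr}(G)$ is the set of irreducible complex characters of $G$, $\mathrm{Conj}(G)$ the set of conjugacy classes, $|C|$ the size of class $C$, $\chi(C)$ the value of $\chi$ on $C$, and $Z(G)$ the centre of $G$. *)

(* Defs.v *)
From mathcomp Require Import all_boot all_order all_algebra all_fingroup all_solvable all_field all_character.
Set Implicit Arguments.
Unset Strict Implicit.
Unset Printing Implicit Defensive.

(* Main.v *)
Require Import Defs.
From mathcomp Require Import all_boot all_order all_algebra all_fingroup all_solvable all_field all_character.
From mathcomp Require Import ring.
Import GRing.Theory Num.Theory.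
Local Open Scope ring_scope.

Lemma char_aut_pow (gT : finGroupType) (G : {group gT}) (chi : 'CF(G))
   (nu : {rmorphism algC -> algC}) (n k : nat) x :
  (forall z : algC, z ^+ n = 1 -> nu z = z ^+ k) ->
  chi \is a character -> x \in G -> (#[x]%g %| n)%N ->
  nu (chi x) = chi (x ^+ k)%g.
Proof.
move=> hnu Nchi Gx dvx.
have sXG: <[x]>%g \subset G by rewrite cycle_subG.
rewrite -!(cfResE chi sXG) ?mem_cycle ?cycle_id //.
have [r ->] := char_sum_irr (cfRes_char <[x]>%g Nchi).
rewrite !sum_cfunE rmorph_sum; apply: eq_bigr => j _.
have Lj := irr_cyclic_lin j (cycle_cyclic x).
rewrite lin_charX ?cycle_id //; apply: hnu.
rewrite -lin_charX ?cycle_id //.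
have -> : (x ^+ n = 1)%g by apply/eqP; rewrite -order_dvdn.
exact: lin_char1.
Qed.
Arguments char_aut_pow {gT G chi nu n k x}.

Lemma reindex_pow (gT : finGroupType) (G : {group gT}) k (F : gT -> algC) :
  coprime #|G| k -> \sum_(g in G) F (g ^+ k)%g = \sum_(g in G) F g.
Proof.
move=> cok.
have inj : {in G &, injective (fun g => g ^+ k)%g}.
  exact: can_in_inj (expgK cok).
rewrite -(big_imset F inj) /=; apply: eq_bigl => h.
suff -> : [set (g ^+ k)%g | g in G] = G :> {set gT} by [].
apply/eqP; rewrite eqEcard card_in_imset // leqnn andbT.
by apply/subsetP=> _ /imsetP[g Gg ->]; rewrite groupX.
Qed.

Lemma card_class_pow (gT : finGroupType) (G : {group gT}) k g :
  coprime #|G| k -> g \in G -> #|(g ^+ k) ^: G|%g = #|g ^: G|%g.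
Proof.
move=> cok Gg.
have inj : {in G &, injective (fun g => g ^+ k)%g}.
  exact: can_in_inj (expgK cok).
have -> : ((g ^+ k) ^: G)%g = [set (h ^+ k)%g | h in (g ^: G)%g].
  rewrite /class -imset_comp; apply: eq_imset => y /=.
  by rewrite conjXg.
rewrite card_in_imset //; apply: sub_in2 inj => h /imsetP[y Gy ->].
by rewrite groupJ.
Qed.

Lemma sum_rat (gT : finGroupType) (G : {group gT}) (i j : Iirr G) :
  \sum_(g in G) #|(g ^: G)%g|%:R * 'chi_i g * 'chi_j (g^-1)%g \in Crat.
Proof.
set S := \sum_(g in G) _.
have [Qn galQn [QnC gQnC [w [prw _] Qn_g]]] := group_num_field_exists G.
have [a Da] : exists a, QnC a = S.
  rewrite /S; apply: (big_ind (fun x => exists a, QnC a = x)).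
  - by exists 0; rewrite rmorph0.
  - by move=> _ _ [a <-] [b <-]; exists (a + b); rewrite rmorphD.
  - move=> g Gg.
    have [b Db] := Qn_g _ G _ (irr_char i) g (order_dvdG Gg).
    have [c Dc] := Qn_g _ G _ (irr_char j) (g^-1)%g (order_dvdG (groupVr Gg)).
    by exists (#|(g ^: G)%g|%:R * b * c); rewrite !rmorphM rmorph_nat Db Dc.
suff : a \in 1%VS.
  by case/vlineP=> q Dq; rewrite -Da Dq rmorphZ_num rmorph1 mulr1 Crat_rat.
rewrite -(galois_fixedField galQn); apply/fixedFieldP; first exact: memvf.
move=> s Gs.
have [nu Dnu] := gQnC s.
apply: (fmorph_inj QnC); rewrite Dnu Da.
set n := #|G|.
have prC : n.-primitive_root (QnC w) by rewrite fmorph_primitive_root.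
have prnu : n.-primitive_root (nu (QnC w)) by rewrite fmorph_primitive_root.
have [k Dk] := prim_rootP prC (prim_expr_order prnu).
have cok : coprime n k by rewrite coprime_sym -(prim_root_exp_coprime k prC) -Dk.
have hnu z : z ^+ n = 1 -> nu z = z ^+ k.
  by move=> /(prim_rootP prC)[m ->]; rewrite rmorphXn Dk -!exprM mulnC.
rewrite /S rmorph_sum -[RHS](@reindex_pow _ G k _ cok) /=; apply: eq_bigr => g Gg.
rewrite !rmorphM rmorph_nat !(char_aut_pow hnu) ?irr_char ?groupV ?order_dvdG ?groupV //.
by rewrite card_class_pow // expgVn.
Qed.
Lemma irr_center_mul (gT : finGroupType) (G : {group gT}) (i : Iirr G) z g :
  z \in 'Z(G)%g -> g \in G ->
  'chi_i (z * g)%g = 'chi_i z / 'chi_i 1%g * 'chi_i g.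
Proof.
move=> Zz Gg.
have Gz : z \in G by move: Zz => /setIP[].
have : z \in 'Z('chi_i)%CF by rewrite -cap_cfcenter_irr in Zz; move/bigcapP: Zz; apply.
rewrite -irrRepr cfcenter_repr => /setIdP[_ /is_scalar_mxP[c rGz]].
rewrite !cfunE groupM // Gz Gg group1 !mulr1n repr_mxM // rGz repr_mx1.
rewrite mul_scalar_mx mxtraceZ mxtrace_scalar mxtrace1.
rewrite -[c *+ _]mulr_natr mulfK //.
have := irr1_gt0 i; rewrite -irrRepr cfRepr1 ltr0n => h.
by rewrite pnatr_eq0 -lt0n.
Qed.

Lemma f_Aint (gT : finGroupType) (G : {group gT}) (i j : Iirr G) g : g \in G ->
  #|(g ^: G)%g|%:R * 'chi_i g * 'chi_j (g^-1)%g \in Aint.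
Proof.
move=> Gg; rewrite rpredM ?Aint_irr //.
have nz : 'chi_i 1%g != 0 by rewrite irr1_neq0.
rewrite -[_ * _](divfK nz) rpredM ?Aint_class_div_irr1 //.
exact: Aint_Cnat (Cnat_irr1 i).
Qed.

Theorem proposition3p2 (gT : finGroupType) (G : {group gT}) (i j : Iirr G) :
  let S := \sum_(C in classes G)
             (#|C|%:R) ^+ 2 * 'chi_i (repr C) * ('chi_j (repr C))^* in
  S \in Num.int /\ (#|('Z(G))%g|%:R %| S)%C.
Proof.
move=> S.
pose f g := #|(g ^: G)%g|%:R * 'chi_i g * 'chi_j (g^-1)%g.
have ES : S = \sum_(g in G) f g.
  have E2 := @sum_by_classes _ G _ f.
  rewrite E2; last first.
    by move=> g h Gg Gh; rewrite /f classGidl // -conjVg !cfunJ.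
  apply: eq_bigr => C /repr_classesP[_ DC].
  by rewrite /f -DC irr_inv expr2 !mulrA.
have Sint : S \in Num.int.
  rewrite ES Cint_rat_Aint ?sum_rat //.
  by rewrite rpred_sum // => g Gg; apply: f_Aint.
split => //.
rewrite /dvdC.
have nzZ0 : ((#|('Z(G))%g|%:R : algC) == 0) = false by rewrite pnatr_eq0; apply/negbTE; rewrite -lt0n cardG_gt0.
rewrite nzZ0 unfold_in /=.
clearbody S.
have [->|nzS] := eqVneq S 0; first by rewrite mul0r rpred0.
rewrite ES in nzS *.
set Z := 'Z(G)%g.
have ZG : Z \subset G := center_sub G.
have lam z : z \in Z -> exists c, forall g, g \in G -> f (z * g)%g = c * f g.
  move=> Zz; have Gz := subsetP ZG z Zz.
  have cz : forall y, y \in G -> commute z y.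
    by move/centerP: Zz => [_ c].
  have cGz : forall y, y \in G -> commute y z.
    by move=> y Gy; apply: commute_sym; apply: cz.
  have zfix y : y \in G -> (z ^ y = z)%g.
    by move=> Gy; rewrite conjgE (cz y Gy) mulKg.
  exists ('chi_i z / 'chi_i 1%g * ('chi_j (z^-1)%g / 'chi_j 1%g)).
  move=> g Gg; rewrite /f.
  have -> : #|((z * g) ^: G)%g| = #|(g ^: G)%g|.
    have -> : ((z * g) ^: G)%g = [set (z * h)%g | h in (g ^: G)%g].
      rewrite /class -imset_comp; apply: eq_in_imset => y Gy /=.
      by rewrite conjMg zfix.
    by rewrite card_imset //; apply: mulgI.
  have -> : ((z * g)^-1 = z^-1 * g^-1)%g.
    rewrite invMg; apply: commuteV; apply: commute_sym; apply: commuteV.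
    exact: cz.
  rewrite !irr_center_mul ?groupV //.
  by ring.
have fZ z g : z \in Z -> g \in G -> f (z * g)%g = f g.
  move=> Zz Gg; have [c Hc] := lam z Zz; rewrite Hc //.
  have Gz := subsetP ZG z Zz.
  suff -> : c = 1 by rewrite mul1r.
  apply: (mulIf nzS); rewrite mul1r.
  rewrite mulr_sumr.
  have -> : \sum_(g in G) f g = \sum_(g in G) f (z * g)%g.
    rewrite -(big_imset f (in2W (mulgI z))) /=.
    apply: eq_bigl => h; congr (h \in _).
    by rewrite -[in LHS](lcoset_id Gz) -lcosetE.
  by apply: eq_bigr => h Gh; rewrite Hc.
have PZ := rcosets_partition_mul G [group of Z].
rewrite mulSGid // in PZ.
have EZ : \sum_(g in G) f g = #|Z|%:R * \sum_(A in rcosets Z G) f (repr A).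
  have -> : \sum_(g in G) f g = \sum_(g in cover (rcosets Z G)) f g.
    by rewrite (cover_partition PZ).
  rewrite big_trivIset; last by case/and3P: PZ.
  rewrite mulr_sumr; apply: eq_bigr => A /rcosetsP[x Gx ->].
  have Hfx g : g \in (Z :* x)%g -> f g = f x.
    rewrite mem_rcoset => Zgx.
    by rewrite -[g](mulgKV x) fZ.
  rewrite (eq_bigr (fun _ => f x)) // sumr_const card_rcoset.
  by rewrite (Hfx (repr ((Z :* x)%g))) ?mem_repr_rcoset // mulr_natl.
have nzZ : (#|Z|%:R : algC) != 0 by rewrite pnatr_eq0 -lt0n cardG_gt0.
apply: Cint_rat_Aint; first by rewrite rpred_div ?rpred_nat ?sum_rat.
rewrite EZ mulrAC divff // mul1r rpred_sum // => A /rcosetsP[x Gx ->].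
apply: f_Aint.
have := mem_repr_rcoset [group of Z] x.
by rewrite mem_rcoset => /(subsetP ZG) h; rewrite -[repr _](mulgKV x) groupM.
Qed.
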